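(* Let $E$ be a complex vector space of dimension $e$, let $U$ be a complex symplectic vector space of dimension $2k$ ($k\ge1$), and let $V=\operatorname{Sym}(E\otimes U)$ with the commuting actions of $\mathfrak{g}=\mathfrak{sp}(U)$ and $H=\mathfrak{gl}(E)$. Write $U=(U_1\oplus U_1^* )\oplus\cdots\oplus(U_k\oplus U_k^* )$ with $U_i,U_i^*$ lines such that the form pairs $U_i$ with $U_i^*$ and the summands $U_i\oplus U_i^*$ are mutually orthogonal; let the Cartan subalgebra of $\mathfrak{sp}(U)$ be the elements preserving each of these lines, and identify a weight $\chi$ with the $k$-tuple $(\chi_1,\dots,\chi_k)$ where $\varepsilon_i$ is the weight on $U_i$ (so $-\varepsilon_i$ is the weight on $U_i^*$). For $n\in\mathbf{Z}$ let $L_n=\bigoplus_{d\ge0}\operatorname{Sym}^d(E)\otimes\operatorname{Sym}^{d+n}(E)$ (with $\operatorname{Sym}^m=0$ for $m<0$). Then for every $\chi\in\mathbf{Z}^k$, as $H$-representations, \[ V_\chi\cong L_{\chi_1}\otimes\cdots\otimes L_{\chi_k}. \]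
   Context: $V_\chi$ denotes the $\chi$-weight space of $V$ for the Cartan subalgebra described in the claim. *)

(* Defs.v *)
From HB Require Import structures.
From mathcomp Require Import all_boot all_order all_algebra.
From mathcomp Require Import mpoly.
Set Implicit Arguments. Unset Strict Implicit. Unset Printing Implicit Defensive.
Import Order.TTheory GRing.Theory Num.Theory.
Local Open Scope ring_scope.

(* E = C^e with standard basis (eps_a)_{a<e};
   U = C^(k+k) with basis u_j; u_i (i<k, index lshift k i) spans U_i and
   u_{k+i} (index rshift k i) spans U_i^*; standard symplectic form J.
   V = Sym(E (x) U) = polynomial ring in the variables x_{a,j} = eps_a (x) u_j. *)
Section Defs.
Variables (C : numClosedFieldType) (e k : nat).

Definition Vsp := {mpoly C[e * (k + k)]}.
Definition xi (a : 'I_e) (j : 'I_(k + k)) : 'I_(e * (k + k)) := mxvec_index a j.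
Definition xv (a : 'I_e) (j : 'I_(k + k)) : Vsp := 'X_(xi a j).

(* gl(U) acts on E (x) U by id (x) A, u_j |-> sum_l A l j u_l,
   extended to Sym(E (x) U) as a derivation *)
Definition glU_act (A : 'M[C]_(k + k)) (p : Vsp) : Vsp :=
  \sum_(a < e) \sum_(j < k + k) \sum_(l < k + k) (A l j *: (xv a l * p^`M(xi a j))).

(* gl(E) acts on E (x) U by B (x) id, eps_a |-> sum_b B b a eps_b,
   extended to Sym(E (x) U) as a derivation *)
Definition glE_act (B : 'M[C]_e) (p : Vsp) : Vsp :=
  \sum_(a < e) \sum_(b < e) \sum_(j < k + k) (B b a *: (xv b j * p^`M(xi a j))).

Definition Jform : 'M[C]_(k + k) := block_mx 0 1%:M (- 1%:M) 0.

Definition in_sp (A : 'M[C]_(k + k)) : Prop := A^T *m Jform + Jform *m A = 0.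

(* Cartan subalgebra: elements of sp(U) preserving each line U_i, U_i^*
   (i.e. each basis line C u_j) *)
Definition in_cartan (h : 'M[C]_(k + k)) : Prop :=
  in_sp h /\ forall j l : 'I_(k + k), j != l -> h l j = 0.

(* chi = sum_i chi_i eps_i, where eps_i(h) = eigenvalue of h on U_i *)
Definition weight_val (chi : 'I_k -> int) (h : 'M[C]_(k + k)) : C :=
  \sum_(i < k) (chi i)%:~R * h (lshift k i) (lshift k i).

Definition weight_space (chi : 'I_k -> int) (p : Vsp) : Prop :=
  forall h, in_cartan h -> glU_act h p = weight_val chi h *: p.

(* Target: k copies of Sym(E) (x) Sym(E), realized as the polynomial ring in
   variables y_{i,a} (first factor Sym(E)) and z_{i,a} (second factor),
   i < k, a < e.  A tensor product of subspaces living in disjoint sets of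
   variables is realized as the span of the products. *)
Definition Wsp := {mpoly C[k * (e + e)]}.
Definition yi (i : 'I_k) (a : 'I_e) : 'I_(k * (e + e)) := mxvec_index i (lshift e a).
Definition zi (i : 'I_k) (a : 'I_e) : 'I_(k * (e + e)) := mxvec_index i (rshift e a).
Definition yv i a : Wsp := 'X_(yi i a).
Definition zv i a : Wsp := 'X_(zi i a).

(* L_n = (+)_{d>=0} Sym^d(E) (x) Sym^{d+n}(E), in the i-th pair of variable sets:
   polynomials in the y_{i,.}, z_{i,.} only, each monomial of which has
   z-degree = y-degree + n. *)
Definition L_sub (i : 'I_k) (n : int) (q : Wsp) : Prop :=
  forall m : 'X_{1..k * (e + e)}, m \in msupp q ->
    (forall v : 'I_(k * (e + e)),
       (forall a, v != yi i a) -> (forall a, v != zi i a) -> m v = 0%N) /\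
    (((\sum_(a < e) m (zi i a))%N)%:Z = ((\sum_(a < e) m (yi i a))%N)%:Z + n).

Definition L_tensor (chi : 'I_k -> int) (q : Wsp) : Prop :=
  exists s : seq {ffun 'I_k -> Wsp},
    (forall f, f \in s -> forall i, L_sub i (chi i) (f i)) /\
    q = \sum_(f <- s) \prod_(i < k) f i.

Definition glE_actW (B : 'M[C]_e) (q : Wsp) : Wsp :=
  \sum_(i < k) \sum_(a < e) \sum_(b < e)
     (B b a *: (yv i b * q^`M(yi i a) + zv i b * q^`M(zi i a))).

End Defs.

(* Main.v *)
Require Import Defs.
From HB Require Import structures.
From mathcomp Require Import all_boot all_order all_algebra.
From mathcomp Require Import mpoly.
Import Order.TTheory GRing.Theory Num.Theory.
Local Open Scope ring_scope.
Set Implicit Arguments. Unset Strict Implicit. Unset Printing Implicit Defensive.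
Section Idx.
Variables (e k : nat).

Definition unvec m n (v : 'I_(m * n)) : 'I_m * 'I_n :=
  enum_val (cast_ord (esym (mxvec_cast m n)) v).

Lemma unvecE m n (i : 'I_m) (j : 'I_n) : unvec (mxvec_index i j) = (i, j).
Proof. by rewrite /unvec /mxvec_index cast_ordK enum_rankK. Qed.

Lemma mxvec_index_inj m n (i i' : 'I_m) (j j' : 'I_n) :
  mxvec_index i j = mxvec_index i' j' -> i = i' /\ j = j'.
Proof. by move=> /(congr1 (@unvec m n)); rewrite !unvecE => -[-> ->]. Qed.

Definition sig (v : 'I_(e * (k + k))) : 'I_(k * (e + e)) :=
  let: (a, j) := unvec v in
  match split j with inl i => zi i a | inr i => yi i a end.

Definition tau (w : 'I_(k * (e + e))) : 'I_(e * (k + k)) :=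
  let: (i, b) := unvec w in
  match split b with inl a => xi a (rshift k i) | inr a => xi a (lshift k i) end.

Lemma split_l m n (i : 'I_m) : split (lshift n i) = inl i.
Proof. exact: (@unsplitK m n (inl i)). Qed.
Lemma split_r m n (i : 'I_n) : split (rshift m i) = inr i.
Proof. exact: (@unsplitK m n (inr i)). Qed.

Lemma sig_l a i : sig (xi a (lshift k i)) = zi i a.
Proof. by rewrite /sig /xi unvecE split_l. Qed.
Lemma sig_r a i : sig (xi a (rshift k i)) = yi i a.
Proof. by rewrite /sig /xi unvecE split_r. Qed.
Lemma tau_y i a : tau (yi i a) = xi a (rshift k i).
Proof. by rewrite /tau /yi unvecE split_l. Qed.
Lemma tau_z i a : tau (zi i a) = xi a (lshift k i).
Proof. by rewrite /tau /zi unvecE split_r. Qed.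

Lemma sigK : cancel sig tau.
Proof.
move=> v; case/mxvec_indexP: v => a j.
by case: (split_ordP j) => i ->; rewrite ?sig_l ?sig_r ?tau_y ?tau_z.
Qed.
Lemma tauK : cancel tau sig.
Proof.
move=> w; case/mxvec_indexP: w => i b.
by case: (split_ordP b) => a ->; rewrite -?/(yi i a) -?/(zi i a) ?tau_y ?tau_z ?sig_l ?sig_r.
Qed.

Definition blk (w : 'I_(k * (e + e))) : 'I_k := (unvec w).1.
Lemma blk_y i a : blk (yi i a) = i. Proof. by rewrite /blk /yi unvecE. Qed.
Lemma blk_z i a : blk (zi i a) = i. Proof. by rewrite /blk /zi unvecE. Qed.
Lemma blkP w : (exists a, w = yi (blk w) a) \/ (exists a, w = zi (blk w) a).
Proof.
case/mxvec_indexP: w => i b; rewrite /blk unvecE /=.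
by case: (split_ordP b) => a ->; [left|right]; exists a.
Qed.
Lemma yz_neq (i j : 'I_k) (a b : 'I_e) : i != j -> (yi i a != yi j b) && (yi i a != zi j b)
   && (zi i a != yi j b) && (zi i a != zi j b).
Proof.
move=> ij; rewrite -!andbA; apply/and4P; split; apply/eqP => /mxvec_index_inj [E _];
  by rewrite E eqxx in ij.
Qed.
Lemma yz_neq' (i : 'I_k) (a b : 'I_e) : yi i a != zi i b.
Proof.
apply/eqP => /mxvec_index_inj [_ E].
by move: (congr1 (@split e e) E); rewrite split_l split_r.
Qed.
Lemma lr_neq m (i j : 'I_m) : (lshift m i == rshift m j) = false.
Proof. by apply/negbTE/eqP => /(congr1 (@split m m)); rewrite split_l split_r. Qed.
Lemma rl_neq m (i j : 'I_m) : (rshift m i == lshift m j) = false.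
Proof. by apply/negbTE/eqP => /(congr1 (@split m m)); rewrite split_l split_r. Qed.
End Idx.
Section Maps.
Variables (C : numClosedFieldType) (e k : nat).
Local Notation N := (e * (k + k))%N.
Local Notation M := (k * (e + e))%N.
Local Notation V := (Vsp C e k).
Local Notation W := (Wsp C e k).

Definition ren (m : 'X_{1..N}) : 'X_{1..M} := [multinom m (tau w) | w < M].
Definition ren' (m : 'X_{1..M}) : 'X_{1..N} := [multinom m (sig v) | v < N].

Lemma renK : cancel ren ren'.
Proof. by move=> m; apply/mnmP => v; rewrite !mnmE sigK. Qed.
Lemma ren'K : cancel ren' ren.
Proof. by move=> m; apply/mnmP => v; rewrite !mnmE tauK. Qed.

Definition phi0 (p : V) : W := mmap (@mpolyC _ C) (fun v => 'X_(sig v)) p.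
Definition psi0 (q : W) : V := mmap (@mpolyC _ C) (fun w => 'X_(tau w)) q.

Lemma phi0X m : phi0 'X_[m] = 'X_[ren m].
Proof.
rewrite /phi0 mmapX /mmap1 mpolyXE_id.
rewrite (reindex (@sig e k) (onW_bij _ (Bijective (@sigK e k) (@tauK e k)))) /=.
by apply: eq_bigr => v _; rewrite mnmE sigK.
Qed.
Lemma psi0X m : psi0 'X_[m] = 'X_[ren' m].
Proof.
rewrite /psi0 mmapX /mmap1 mpolyXE_id.
rewrite (reindex (@tau e k) (onW_bij _ (Bijective (@tauK e k) (@sigK e k)))) /=.
by apply: eq_bigr => v _; rewrite mnmE tauK.
Qed.

Lemma phi0_lin : linear phi0.
Proof. by move=> a p q; rewrite /phi0 mmapD mmapZ mul_mpolyC. Qed.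
Lemma psi0_lin : linear psi0.
Proof. by move=> a p q; rewrite /psi0 mmapD mmapZ mul_mpolyC. Qed.

HB.instance Definition _ := GRing.isLinear.Build C V W *:%R phi0 phi0_lin.
HB.instance Definition _ := GRing.isLinear.Build C W V *:%R psi0 psi0_lin.

Lemma phi0M p q : phi0 (p * q) = phi0 p * phi0 q.
Proof. exact: rmorphM. Qed.

Lemma phi0E p : phi0 p = \sum_(m <- msupp p) p@_m *: 'X_[ren m].
Proof.
rewrite {1}(mpolyE p) linear_sum; apply: eq_bigr => m _.
by rewrite linearZ /= phi0X.
Qed.
Lemma psi0E q : psi0 q = \sum_(m <- msupp q) q@_m *: 'X_[ren' m].
Proof.
rewrite {1}(mpolyE q) linear_sum; apply: eq_bigr => m _.
by rewrite linearZ /= psi0X.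
Qed.

Lemma mcoeff_phi0 p m : (phi0 p)@_m = p@_(ren' m).
Proof.
rewrite phi0E raddf_sum /=.
have := congr1 (mcoeff (ren' m)) (mpolyE p); rewrite raddf_sum /= => ->.
apply: eq_bigr => m' _.
rewrite !mcoeffZ !mcoeffX; congr (_ * (_ %:R)).
by rewrite (can2_eq renK ren'K).
Qed.
Lemma mcoeff_psi0 q m : (psi0 q)@_m = q@_(ren m).
Proof.
rewrite psi0E raddf_sum /=.
have := congr1 (mcoeff (ren m)) (mpolyE q); rewrite raddf_sum /= => ->.
apply: eq_bigr => m' _.
rewrite !mcoeffZ !mcoeffX; congr (_ * (_ %:R)).
by rewrite (can2_eq ren'K renK).
Qed.

Lemma psi0K : cancel psi0 phi0.
Proof. by move=> q; apply/mpolyP => m; rewrite mcoeff_phi0 mcoeff_psi0 ren'K. Qed.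
Lemma phi0K : cancel phi0 psi0.
Proof. by move=> p; apply/mpolyP => m; rewrite mcoeff_psi0 mcoeff_phi0 renK. Qed.

Lemma phi0_deriv p v : phi0 (p^`M(v)) = (phi0 p)^`M(sig v).
Proof.
apply/mpolyP => m; rewrite mcoeff_phi0 !mcoeff_mderiv mcoeff_phi0.
have -> : ren' (m + U_(sig v)) = (ren' m + U_(v))%MM.
  apply/mnmP => u; rewrite !mnmE; congr (_ + _)%N.
  by rewrite (inj_eq (can_inj (@sigK e k))).
by rewrite mnmE.
Qed.

End Maps.
Section Euler.
Variables (C : numClosedFieldType) (n : nat).

Lemma euler_coef (v : 'I_n) (q : {mpoly C[n]}) m :
  ('X_v * q^`M(v))@_m = (m v)%:R * q@_m.
Proof.
rewrite mpoly_mulC.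
case: (posnP (m v)) => [mv0|mvp].
  rewrite mv0 mul0r.
  rewrite {1}(mpolyE (q^`M(v))) mulr_suml raddf_sum /= big1 // => m' _.
  rewrite -scalerAl -mpolyXD mcoeffZ mcoeffX.
  case: eqP => [E|_]; last by rewrite mulr0.
  by move: mv0; rewrite -E mnmDE mnm1E eqxx addn1.
have E : (U_(v) + (m - U_(v)))%MM = m.
  apply/mnmP => u; rewrite mnmDE mnmBE mnm1E.
  by case: eqP => [<-|_]; rewrite ?subn0 // subnKC.
rewrite -{1}E mcoeffMX mcoeff_mderiv addmC E mnmBE mnm1E eqxx subn1 prednK //.
by rewrite mulr_natl.
Qed.
End Euler.

Section Weight.
Variables (C : numClosedFieldType) (e k : nat) (chi : 'I_k -> int).
Local Notation N := (e * (k + k))%N.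
Local Notation V := (Vsp C e k).

Definition cd (m : 'X_{1..N}) (j : 'I_(k + k)) : nat := (\sum_(a < e) m (xi a j))%N.

Definition wcond (m : 'X_{1..N}) : Prop :=
  forall i, (cd m (lshift k i))%:Z - (cd m (rshift k i))%:Z = chi i.

Lemma glU_diag (h : 'M[C]_(k + k)) (hd : forall j l, j != l -> h l j = 0) (p : V) m :
  (glU_act h p)@_m = (\sum_j h j j * (cd m j)%:R) * p@_m.
Proof.
rewrite /glU_act raddf_sum /=.
under eq_bigr => a _ do rewrite raddf_sum /=.
rewrite exchange_big mulr_suml; apply: eq_bigr => j _ /=.
rewrite /cd natr_sum mulr_sumr mulr_suml; apply: eq_bigr => a _.
rewrite raddf_sum /= (bigD1 j) //= big1 ?addr0; last first.
  by move=> l /negPf lj; rewrite hd ?scale0r ?raddf0 //; rewrite eq_sym lj.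
by rewrite mcoeffZ euler_coef mulrA.
Qed.

Lemma J_lr i j : Jform C k (lshift k i) (rshift k j) = (i == j)%:R.
Proof. by rewrite /Jform block_mxEur mxE. Qed.
Lemma J_rl i j : Jform C k (rshift k i) (lshift k j) = - (i == j)%:R.
Proof. by rewrite /Jform block_mxEdl !mxE. Qed.
Lemma J_ll i j : Jform C k (lshift k i) (lshift k j) = 0.
Proof. by rewrite /Jform block_mxEul mxE. Qed.
Lemma J_rr i j : Jform C k (rshift k i) (rshift k j) = 0.
Proof. by rewrite /Jform block_mxEdr mxE. Qed.

Lemma cartan_rel (h : 'M[C]_(k + k)) : in_cartan h -> forall i,
  h (rshift k i) (rshift k i) = - h (lshift k i) (lshift k i).
Proof.
case=> hsp hd i; move/matrixP: hsp => /(_ (lshift k i) (rshift k i)).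
rewrite /= !mxE (bigD1 (lshift k i)) //= big1; last first.
  by move=> x xl; rewrite mxE hd ?mul0r // eq_sym.
rewrite (bigD1 (rshift k i)) //= big1; last first.
  by move=> x xl; rewrite hd ?mulr0 // eq_sym.
rewrite mxE J_lr eqxx mulr1 mul1r !addr0 => /eqP.
by rewrite addr_eq0 => /eqP ->; rewrite opprK.
Qed.

Lemma weight_of_cond (p : V) : (forall m, m \in msupp p -> wcond m) ->
  weight_space chi p.
Proof.
move=> Hc h hc; apply/mpolyP => m.
rewrite glU_diag; last by case: hc.
rewrite mcoeffZ; case: (boolP (m \in msupp p)) => [mp|]; last first.
  by move=> /memN_msupp_eq0 ->; rewrite !mulr0.
congr (_ * _); rewrite big_split_ord /= /weight_val -big_split /=.
apply: eq_bigr => i _; rewrite cartan_rel // -(Hc m mp i).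
rewrite mulNr -mulrBr mulrC; congr (_ * _).
by rewrite rmorphB.
Qed.

Definition hdiag (t : 'I_(k + k) -> C) : 'M[C]_(k + k) :=
  \matrix_(l, j) (if l == j then t j else 0).

Lemma hdiag_cartan t : (forall i, t (rshift k i) = - t (lshift k i)) ->
  in_cartan (hdiag t).
Proof.
move=> ht; split; last by move=> j l jl; rewrite mxE eq_sym (negPf jl).
rewrite /in_sp [Jform C k]lock; apply/matrixP => x y; rewrite !mxE.
rewrite (bigD1 x) //= big1; last by move=> z zx; rewrite !mxE (negPf zx) mul0r.
rewrite (bigD1 y) //= big1; last by move=> z zy; rewrite !mxE (negPf zy) mulr0.
rewrite !mxE !eqxx !addr0.
case: (split_ordP x) => i ->; case: (split_ordP y) => j ->;
  rewrite -lock ?J_ll ?J_rr ?J_lr ?J_rl ?mulr0 ?mul0r ?addr0 //;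
  case: (eqVneq i j) => [<-|/negPf ij]; rewrite ?eqxx ?ij ?ht /=;
  rewrite ?oppr0 ?mulr0 ?mul0r ?addr0 ?mulr1 ?mul1r ?mulrN1 ?mulN1r ?opprK //.
  by rewrite subrr.
by rewrite subrr.
Qed.

Lemma cond_of_weight (p : V) : weight_space chi p ->
  forall m, m \in msupp p -> wcond m.
Proof.
move=> Hw m mp i0.
pose t (j : 'I_(k + k)) : C :=
  if j == lshift k i0 then 1 else if j == rshift k i0 then -1 else 0.
have ht : forall i, t (rshift k i) = - t (lshift k i).
  move=> i; rewrite /t.
  have -> : (rshift k i == lshift k i0) = false.
    by apply/negbTE/eqP => /(congr1 (@split k k)); rewrite split_l split_r.
  have -> : (lshift k i == rshift k i0) = false.
    by apply/negbTE/eqP => /(congr1 (@split k k)); rewrite split_l split_r.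
  rewrite (inj_eq (@rshift_inj k k)) (inj_eq (@lshift_inj k k)).
  by case: (i == i0); rewrite ?oppr0.
have := congr1 (mcoeff m) (Hw _ (hdiag_cartan ht)).
rewrite glU_diag; last by move=> j l jl; rewrite mxE eq_sym (negPf jl).
rewrite mcoeffZ => /mulIf; rewrite mcoeff_msupp in mp => /(_ mp).
rewrite big_split_ord /= /weight_val -big_split /=.
rewrite (bigD1 i0) //= big1; last first.
  move=> i ii0; rewrite !mxE !eqxx /t.
  rewrite (inj_eq (@rshift_inj k k)) (inj_eq (@lshift_inj k k)) (negPf ii0).
  by rewrite lr_neq rl_neq /= !mul0r addr0.
rewrite (bigD1 i0) //= big1 ?addr0; last first.
  by move=> i ii0; rewrite !mxE eqxx /t (inj_eq (@lshift_inj k k)) (negPf ii0) lr_neq /= mulr0.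
rewrite !mxE !eqxx /t eqxx.
have -> : (rshift k i0 == lshift k i0) = false.
  by apply/negbTE/eqP => /(congr1 (@split k k)); rewrite split_l split_r.
rewrite eqxx /= mulr1 mul1r mulN1r => E; apply: (@intr_inj C).
by rewrite rmorphB /= -E.
Qed.
End Weight.
Section Equiv.
Variables (C : numClosedFieldType) (e k : nat).
Local Notation V := (Vsp C e k).
Local Notation W := (Wsp C e k).

Lemma phi0U v : @phi0 C e k 'X_v = 'X_(sig v).
Proof.
rewrite phi0X; congr 'X_[_]; apply/mnmP => w; rewrite !mnmE.
by rewrite -(inj_eq (can_inj (@tauK e k))) sigK.
Qed.

Lemma phi0_equiv (B : 'M[C]_e) (p : V) :
  @phi0 C e k (glE_act B p) = glE_actW B (@phi0 C e k p).
Proof.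
rewrite /glE_act /glE_actW linear_sum /= [RHS]exchange_big /=.
apply: eq_bigr => a _; rewrite linear_sum [RHS]exchange_big /=.
apply: eq_bigr => b _; rewrite linear_sum big_split_ord /= -big_split /=.
apply: eq_bigr => i _.
rewrite !linearZ /= !phi0M !phi0U !phi0_deriv !sig_l !sig_r scalerDr addrC.
by [].
Qed.
End Equiv.
Section Tensor.
Variables (C : numClosedFieldType) (e k : nat) (chi : 'I_k -> int).
Local Notation N := (e * (k + k))%N.
Local Notation M := (k * (e + e))%N.
Local Notation V := (Vsp C e k).
Local Notation W := (Wsp C e k).

Definition Dg (i : 'I_k) (m : 'X_{1..M}) : int :=
  (\sum_(a < e) m (zi i a))%N%:Z - (\sum_(a < e) m (yi i a))%N%:Z.

Lemma Dg0 i : Dg i 0%MM = 0.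
Proof. by rewrite /Dg !big1 // => a _; rewrite mnm0E. Qed.

Lemma DgD i m1 m2 : Dg i (m1 + m2)%MM = Dg i m1 + Dg i m2.
Proof.
rewrite /Dg; under eq_bigr => a _ do rewrite mnmDE.
under [in X in _ - X]eq_bigr => a _ do rewrite mnmDE.
by rewrite !big_split /= !PoszD opprD addrACA.
Qed.

Lemma Dg_sub j (g : W) m : L_sub j (chi j) g -> m \in msupp g ->
  forall i, Dg i m = if j == i then chi j else 0.
Proof.
move=> Hg /Hg [H0 H1] i; case: eqP => [<-|/eqP ji].
  by rewrite /Dg H1 addrAC subrr add0r.
have ij : i != j by rewrite eq_sym.
rewrite /Dg (@big1 _ _ _ _ _ _ (fun a => m (zi i a))); last first.
  move=> a _; apply: H0 => b; have := yz_neq a b ij; by rewrite -!andbA => /and4P [? ? ? ?].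
rewrite (@big1 _ _ _ _ _ _ (fun a => m (yi i a))) //.
move=> a _; apply: H0 => b; have := yz_neq a b ij; by rewrite -!andbA => /and4P [? ? ? ?].
Qed.

Lemma Dg_prod (f : 'I_k -> W) (r : seq 'I_k) :
  (forall j, L_sub j (chi j) (f j)) ->
  forall m, m \in msupp (\prod_(j <- r) f j) ->
  forall i, Dg i m = \sum_(j <- r) (if j == i then chi j else 0).
Proof.
move=> Hf; elim: r => [|j r IH] m.
  rewrite !big_nil -mpolyC1 msupp1 inE => /eqP -> i; by rewrite Dg0 big_nil.
rewrite big_cons => /msuppM_le /allpairsP [[m1 m2] [/= m1s m2s ->]] i.
by rewrite DgD (Dg_sub (Hf j) m1s) (IH _ m2s) big_cons.
Qed.

Lemma Dg_tensor (q : W) : L_tensor chi q -> forall m, m \in msupp q -> forall i, Dg i m = chi i.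
Proof.
case=> s [Hs ->] m /msupp_sum_le /flattenP [ms /mapP [f]]; rewrite filter_predT => fs -> mf i.
rewrite (Dg_prod (Hs f fs) mf) -big_mkcond /=.
by rewrite (big_pred1 i) // => j; rewrite eq_sym.
Qed.

Lemma cd_ren m i : cd (ren' m) (lshift k i) = (\sum_(a < e) m (zi i a))%N /\
  cd (ren' m) (rshift k i) = (\sum_(a < e) m (yi i a))%N.
Proof.
by split; apply: eq_bigr => a _; rewrite mnmE ?sig_l ?sig_r.
Qed.

Definition piece (i : 'I_k) (m : 'X_{1..M}) : 'X_{1..M} :=
  [multinom (if blk w == i then m w else 0%N) | w < M].

Lemma prod_pieceX m : \prod_(i < k) ('X_[piece i m] : W) = 'X_[m].
Proof.
rewrite mpolyXE_id.
under eq_bigr => i _ do rewrite mpolyXE_id.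
rewrite exchange_big /=; apply: eq_bigr => w _.
rewrite (bigD1 (blk w)) //= big1 ?mulr1; first by rewrite mnmE eqxx.
by move=> i /negPf ni; rewrite mnmE eq_sym ni expr0.
Qed.

Variable i0 : 'I_k.

Definition Fm (c : C) (m : 'X_{1..M}) : {ffun 'I_k -> W} :=
  [ffun i => if i == i0 then c *: 'X_[piece i m] else 'X_[piece i m]].

Lemma prodF c m : \prod_(i < k) Fm c m i = c *: 'X_[m].
Proof.
rewrite -prod_pieceX (bigD1 i0) //= [in RHS](bigD1 i0) //= ffunE eqxx -scalerAl.
congr (_ *: (_ * _)); apply: eq_bigr => i /negPf ni; by rewrite ffunE ni.
Qed.

Lemma L_sub_F c m : wcond chi (ren' m) -> forall i, L_sub i (chi i) (Fm c m i).
Proof.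
move=> Hc i m2 Hm2.
have {Hm2} -> : m2 = piece i m.
  move: Hm2; rewrite ffunE; case: (i == i0) => [/msuppZ_le|];
  by rewrite msuppX inE => /eqP.
split.
  move=> v H1 H2; rewrite mnmE; case: eqP => // E.
  by case: (blkP v) => [[a Ea]|[a Ea]]; rewrite E in Ea;
    [move: (H1 a) | move: (H2 a)]; rewrite Ea eqxx.
have -> : (\sum_(a < e) piece i m (zi i a))%N = (\sum_(a < e) m (zi i a))%N.
  by apply: eq_bigr => a _; rewrite mnmE blk_z eqxx.
have -> : (\sum_(a < e) piece i m (yi i a))%N = (\sum_(a < e) m (yi i a))%N.
  by apply: eq_bigr => a _; rewrite mnmE blk_y eqxx.
have := Hc i; case: (cd_ren m i) => -> -> <-.
by rewrite addrC subrK.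
Qed.
End Tensor.

Theorem mainTheorem3 (C : numClosedFieldType) (e k : nat) (hk : (0 < k)%N)
  (chi : 'I_k -> int) :
  exists phi : {linear Vsp C e k -> Wsp C e k},
    [/\ (forall p, weight_space chi p -> L_tensor chi (phi p)),
        (forall p1 p2, weight_space chi p1 -> weight_space chi p2 ->
           phi p1 = phi p2 -> p1 = p2),
        (forall q, L_tensor chi q -> exists2 p, weight_space chi p & phi p = q) &
        (forall (B : 'M[C]_e) p, weight_space chi p ->
           phi (glE_act B p) = glE_actW B (phi p))].
Proof.
pose i0 : 'I_k := Ordinal hk.
exists (@phi0 C e k); split.
- move=> p Hw.
  exists (map (fun m => Fm i0 (p@_m) (ren m)) (msupp p)); split.
    move=> f /mapP [m mp ->] i; apply: L_sub_F.
    by rewrite renK; exact: (cond_of_weight Hw mp).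
  rewrite big_map -[LHS]/(@phi0 C e k p) phi0E; apply: eq_bigr => m _; by rewrite prodF.
- by move=> p1 p2 _ _ E; rewrite -(phi0K p1) E phi0K.
- move=> q Hq; exists (psi0 q); last exact: psi0K.
  apply: weight_of_cond => m mp i.
  have mq : ren m \in msupp q by rewrite mcoeff_msupp -mcoeff_psi0 -mcoeff_msupp.
  have := Dg_tensor Hq mq i; rewrite /Dg.
  by case: (cd_ren (ren m) i); rewrite renK => -> ->.
- by move=> B p _; exact: phi0_equiv.
Qed.
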